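(* Let $\mathcal B$ be finite, $\eta>0$, $B_A>0$, and let $A,\tilde A\in\mathbb R^{\mathcal B}$ satisfy $\|A\|_\infty\le B_A$, $\|\tilde A\|_\infty\le B_A$ and be such that $\nu=\exp(\eta A)$ and $\tilde\nu=\exp(\eta\tilde A)$ are probability vectors on $\mathcal B$. Let ${\rm H}=\mathrm{diag}(\tilde\nu)-\tilde\nu\tilde\nu^\top$ and ${\rm L}=\mathrm{diag}(\nu)-\nu\nu^\top$. Then for every $g\in\mathbb R^{\mathcal B}$, $$e^{2\eta B_A}\,g^\top{\rm L}g\ \ge\ g^\top{\rm H}g\ \ge\ e^{-2\eta B_A}\,g^\top{\rm L}g.$$ *)

(* Defs.v *)
From HB Require Import structures.
From mathcomp Require Import all_boot all_order all_algebra.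
From mathcomp Require Import reals.
From mathcomp Require Import sequences exp.
Set Implicit Arguments. Unset Strict Implicit. Unset Printing Implicit Defensive.
Import Order.TTheory GRing.Theory Num.Theory.
Local Open Scope ring_scope.

Definition supnorm_le {R : realType} {B : finType} (A : B -> R) (c : R) : Prop :=
  forall b, `|A b| <= c.

Definition expvec {R : realType} {B : finType} (eta : R) (A : B -> R) : B -> R :=
  fun b => expR (eta * A b).

Definition prob_vec {R : realType} {B : finType} (nu : B -> R) : Prop :=
  (forall b, 0 <= nu b) /\ \sum_(b : B) nu b = 1.

Definition covmx {R : realType} {B : finType} (nu : B -> R) : B -> B -> R :=
  fun i j => (if i == j then nu i else 0) - nu i * nu j.

Definition qform {R : realType} {B : finType} (M : B -> B -> R) (g : B -> R) : R :=
  \sum_(i : B) \sum_(j : B) g i * M i j * g j.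

(* Main.v *)
Require Import Defs.
From HB Require Import structures.
From mathcomp Require Import all_boot all_order all_algebra.
From mathcomp Require Import reals.
From mathcomp Require Import sequences exp.
From mathcomp Require Import ring lra.
Import Order.TTheory GRing.Theory Num.Theory.
Local Open Scope ring_scope.

Lemma qform_cov (R : realType) (B : finType) (p g : B -> R) :
  qform (covmx p) g = \sum_i p i * g i ^+ 2 - (\sum_i p i * g i) ^+ 2.
Proof.
rewrite /qform /covmx expr2 mulr_suml -sumrB; apply: eq_bigr => i _.
have -> : \sum_j g i * ((if i == j then p i else 0) - p i * p j) * g j =
  \sum_j (g i * (if i == j then p i else 0) * g j) -
  \sum_j (g i * p i) * (p j * g j).
  by rewrite -sumrB; apply: eq_bigr => j _; ring.
rewrite -mulr_sumr (bigD1 i) //= eqxx big1 ?addr0; first ring.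
by move=> j /negbTE ji; rewrite eq_sym ji mulr0 mul0r.
Qed.

Lemma expand_sq (R : realType) (B : finType) (p g : B -> R) (c : R) :
  \sum_i p i * (g i - c) ^+ 2 =
  \sum_i p i * g i ^+ 2 - 2 * c * \sum_i p i * g i + c ^+ 2 * \sum_i p i.
Proof.
rewrite !mulr_sumr -sumrB -big_split /=; apply: eq_bigr => i _; ring.
Qed.

Lemma var_le (R : realType) (B : finType) (p g : B -> R) (c : R) :
  \sum_i p i = 1 ->
  qform (covmx p) g <= \sum_i p i * (g i - c) ^+ 2.
Proof.
move=> hp; rewrite qform_cov.
rewrite expand_sq.
rewrite hp -subr_ge0.
set m := \sum_i p i * g i.
set s := \sum_i p i * g i ^+ 2.
have -> : s - 2 * c * m + c ^+ 2 * 1 - (s - m ^+ 2) = (m - c) ^+ 2 by ring.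
exact: sqr_ge0.
Qed.

Lemma cov_cmp (R : realType) (B : finType) (p q g : B -> R) (K : R) :
  prob_vec p -> prob_vec q -> (forall b, p b <= K * q b) ->
  qform (covmx p) g <= K * qform (covmx q) g.
Proof.
move=> [p0 p1] [q0 q1] hK.
set c := \sum_i q i * g i.
apply: (le_trans (var_le _ _ _ g c p1)).
have -> : qform (covmx q) g = \sum_i q i * (g i - c) ^+ 2.
  rewrite qform_cov.
  rewrite expand_sq.
  rewrite q1 -/c; ring.
rewrite mulr_sumr; apply: ler_sum => i _.
rewrite mulrA; apply: ler_wpM2r; [exact: sqr_ge0 | exact: hK].
Qed.

Lemma keyL (R : realType) (B : finType) (eta BA : R) (heta : 0 < eta) (X Y : B -> R) :
  supnorm_le X BA -> supnorm_le Y BA ->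
    forall b, expvec eta X b <= expR (2 * eta * BA) * expvec eta Y b.
Proof.
  move=> hX hY b; rewrite /expvec -expRD ler_expR.
  have := hX b; have := hY b; rewrite !ler_norml => /andP[? ?] /andP[? ?].
  have h1 : eta * X b <= eta * BA by rewrite ler_pM2l.
  have h2 : eta * (- BA) <= eta * Y b by rewrite ler_pM2l.
  lra.
Qed.
Theorem mainTheorem9 (R : realType) (B : finType) (eta BA : R)
  (A At : B -> R) (heta : 0 < eta) (hBA : 0 < BA)
  (hA : supnorm_le A BA) (hAt : supnorm_le At BA)
  (hnu : prob_vec (expvec eta A)) (hnut : prob_vec (expvec eta At))
  (g : B -> R) :
  let L := covmx (expvec eta A) in
  let H := covmx (expvec eta At) in
  expR (2 * eta * BA) * qform L g >= qform H g /\
  qform H g >= expR (- (2 * eta * BA)) * qform L g.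
Proof.
rewrite /=.
have h1 := cov_cmp _ _ _ _ g _ hnut hnu (keyL _ _ _ _ heta _ _ hAt hA).
have h2 := cov_cmp _ _ _ _ g _ hnu hnut (keyL _ _ _ _ heta _ _ hA hAt).
split; first exact: h1.
rewrite expRN -(ler_pM2l (expR_gt0 (2 * eta * BA))) mulrA mulfV ?mul1r //.
exact: lt0r_neq0 (expR_gt0 _).
Qed.
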